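(* Let $M$ be a matroid of rank $n$ on $[d]$. Then, as subsets of $\mathbb{C}^{nd}$, \[ V_{\mathcal{C}(M)} \;=\; V_M \;\cup \bigcup_{N\in \min(M)} V_{\mathcal{C}(N)} . \]
   Context: A matroid $N$ on $[d]=\{1,\dots,d\}$ is determined by its family $\mathcal{D}(N)$ of dependent sets; $\mathcal{C}(N)$ denotes its circuits (minimal dependent sets). Dependency order: for matroids $N_1,N_2$ on $[d]$, $N_1\le N_2$ iff $\mathcal{D}(N_1)\subseteq\mathcal{D}(N_2)$, and $N_1<N_2$ iff moreover $N_1\ne N_2$. For a matroid $M$ on $[d]$, $\min(M)$ denotes the set of minimal elements (for the dependency order) of the set of all matroids $N$ on $[d]$ with $N>M$ (every such $N$ has rank at most $n$). For a matroid $N$ on $[d]$ of rank at most $n$: a realization of $N$ is a tuple $\gamma=(\gamma_1,\dots,\gamma_d)\in(\mathbb{C}^n)^d\cong\mathbb{C}^{nd}$ such that for every $S\subseteq[d]$ the family $(\gamma_s)_{s\in S}$ is linearly dependent iff $S\in\mathcal{D}(N)$; $\Gamma_N$ is the set of realizations and the matroid variety $V_N$ is the Zariski closure of $\Gamma_N$ in $\mathbb{C}^{nd}$. The circuit variety $V_{\mathcal{C}(N)}$ is the set of all $\gamma\in(\mathbb{C}^n)^d$ such that $(\gamma_s)_{s\in S}$ is linearly dependent for every $S\in\mathcal{D}(N)$. *)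

(* Defs.v *)
From HB Require Import structures.
From mathcomp Require Import all_boot all_order all_algebra.
From mathcomp Require Import Rstruct.
From mathcomp Require Import complex.
From mathcomp Require Import mpoly.
From Stdlib Require Import Rdefinitions.
Set Implicit Arguments. Unset Strict Implicit. Unset Printing Implicit Defensive.
Import GRing.Theory.

Definition CC : closedFieldType := (Rdefinitions.R)[i].

(* D is the family of dependent sets of a matroid on 'I_d: its complement
   (the independent sets) satisfies the independence axioms. *)
Definition is_matroid (d : nat) (D : {set {set 'I_d}}) : Prop :=
  [/\ set0 \notin D,
      (forall A B : {set 'I_d}, A \subset B -> A \in D -> B \in D) &
      (forall A B : {set 'I_d}, A \notin D -> B \notin D -> #|A| < #|B| ->
         exists2 x, x \in B :\: A & x |: A \notin D)].

Definition mrank (d : nat) (D : {set {set 'I_d}}) : nat :=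
  \max_(A : {set 'I_d} | A \notin D) #|A|.

Definition circuits (d : nat) (D : {set {set 'I_d}}) : {set {set 'I_d}} :=
  [set C in D | [forall B : {set 'I_d}, (B \proper C) ==> (B \notin D)]].

Definition dep_lt (d : nat) (D1 D2 : {set {set 'I_d}}) : Prop :=
  D1 \proper D2.

Definition in_min (d : nat) (M N : {set {set 'I_d}}) : Prop :=
  [/\ is_matroid N, dep_lt M N &
      ~ (exists N', [/\ is_matroid N', dep_lt M N' & dep_lt N' N])].

Local Open Scope ring_scope.

(* A point of (C^n)^d: an n x d matrix whose s-th column is gamma_s. *)
Definition config (n d : nat) := 'M[CC]_(n, d).

Definition lin_dep (n d : nat) (g : config n d) (S : {set 'I_d}) : Prop :=
  exists c : 'I_d -> CC,
    (exists2 s, s \in S & c s != 0) /\ \sum_(s in S) c s *: col s g = 0.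

Definition realizations (n d : nat) (D : {set {set 'I_d}}) (g : config n d)
  : Prop :=
  forall S : {set 'I_d}, lin_dep g S <-> S \in D.

Definition peval (n d : nat) (p : {mpoly CC[n * d]}) (g : config n d) : CC :=
  p.@[fun k => mxvec g 0 k].

Definition zariski_closure (n d : nat) (X : config n d -> Prop)
  (g : config n d) : Prop :=
  forall p : {mpoly CC[n * d]},
    (forall h, X h -> peval p h = 0) -> peval p g = 0.

Definition matroid_variety (n d : nat) (D : {set {set 'I_d}}) :
  config n d -> Prop := zariski_closure (@realizations n d D).

Definition circuit_variety (n d : nat) (D : {set {set 'I_d}})
  (g : config n d) : Prop :=
  forall S, S \in D -> lin_dep g S.

(* Main.v *)
Require Import Defs.
From HB Require Import structures.
From mathcomp Require Import all_boot all_order all_algebra.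
From mathcomp Require Import mpoly.
Set Implicit Arguments. Unset Strict Implicit. Unset Printing Implicit Defensive.
Import GRing.Theory.
Local Open Scope ring_scope.

Section Lin.
Variables (n d : nat) (g : config n d).

Definition rv (s : 'I_d) : 'rV[CC]_n := (col s g)^T.
Definition GS (S : {set 'I_d}) : 'M[CC]_(#|S|, n) :=
  \matrix_(i < #|S|) rv (enum_val i).

Lemma lin_dep0 (S : {set 'I_d}) : lin_dep g S <-> exists w : 'I_#|S| -> CC,
  (exists i, w i != 0) /\ \sum_i w i *: col (enum_val i) g = 0.
Proof.
rewrite /lin_dep; split.
  move=> [c [[s Hs cs] Hsum]].
exists (fun i : 'I_#|S| => c (enum_val i)).
split.
    by exists (enum_rank_in Hs s); rewrite enum_rankK_in.
  by move: Hsum; rewrite (big_enum_val (fun s => c s *: col s g)).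
move=> [w [[i wi] Hsum]].
pose c s := \sum_(j | enum_val j == s) w j.
have cE j : c (enum_val j) = w j.
  by rewrite /c (big_pred1 j) // => k /=; rewrite (inj_eq enum_val_inj).
exists c; split.
  by exists (enum_val i); [apply: enum_valP | rewrite cE].
rewrite (big_enum_val (fun s => c s *: col s g)) -[RHS]Hsum.
by apply: eq_bigr => j _; rewrite cE.
Qed.

Lemma mulGS (S : {set 'I_d}) (u : 'rV_#|S|) :
  u *m GS S = (\sum_i u 0 i *: col (enum_val i) g)^T.
Proof.
rewrite mulmx_sum_row linear_sum; apply: eq_bigr => i _.
by rewrite rowK linearZ.
Qed.

Lemma lin_dep1 (S : {set 'I_d}) : lin_dep g S <-> exists2 u : 'rV_#|S|, u != 0 & u *m GS S = 0.
Proof.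
rewrite lin_dep0; split.
  move=> [w [[i wi] Hs]]; exists (\row_j w j).
    by apply/rV0Pn; exists i; rewrite mxE.
  rewrite mulGS (eq_bigr (fun j => w j *: col (enum_val j) g)) ?Hs ?trmx0 //.
  by move=> j _; rewrite mxE.
move=> [u /rV0Pn [i ui] Hu]; exists (fun j => u 0 j); split; first by exists i.
by apply: trmx_inj; rewrite trmx0 -mulGS.
Qed.

Lemma lin_dep2 (S : {set 'I_d}) : lin_dep g S <-> ~~ row_free (GS S).
Proof.
rewrite lin_dep1 -kermx_eq0; split.
  move=> [u u0 Hu]; apply/rowV0Pn; exists u => //; exact/sub_kermxP.
by move=> /rowV0Pn [v /sub_kermxP Hv v0]; exists v.
Qed.


Definition Dg : {set {set 'I_d}} := [set S | ~~ row_free (GS S)].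

Lemma inDg S : (S \in Dg) <-> lin_dep g S.
Proof. by rewrite inE lin_dep2. Qed.

Lemma rv_sub (A : {set 'I_d}) x : x \in A -> (rv x <= GS A)%MS.
Proof.
move=> Hx; rewrite -(enum_rankK_in Hx Hx) -(rowK (fun i => rv (enum_val i))).
exact: row_sub.
Qed.

Lemma tr_sum (A : {set 'I_d}) (c : 'I_d -> CC) :
  (\sum_(s in A) c s *: col s g)^T = \sum_(s in A) c s *: rv s.
Proof. by rewrite linear_sum; apply: eq_bigr => s _; rewrite linearZ. Qed.

Lemma tr_add (x : 'I_d) (c : CC) (X : 'cV[CC]_n) :
  (c *: col x g + X)^T = c *: rv x + X^T.
Proof. by rewrite linearD linearZ. Qed.

Lemma lin_depS (A B : {set 'I_d}) : A \subset B -> lin_dep g A -> lin_dep g B.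
Proof.
move=> AB [c [[s Hs cs] Hsum]].
exists (fun s => if s \in A then c s else 0); split.
  by exists s; [exact: (subsetP AB) | rewrite Hs].
rewrite (eq_bigr (fun s => if s \in A then c s *: col s g else 0)); last first.
  by move=> i _; case: ifP => //; rewrite scale0r.
rewrite -big_mkcondr -[RHS]Hsum; apply: eq_bigl => s'.
by case Hs': (s' \in A); rewrite ?andbT ?andbF // (subsetP AB).
Qed.

Lemma Dg_matroid : is_matroid Dg.
Proof.
split.
- apply/negP => /inDg [c [[s]]]; by rewrite inE.
- by move=> A B AB /inDg HA; apply/inDg; exact: lin_depS HA.
move=> A B HA HB ltAB.
case: (boolP [exists x in B :\: A, x |: A \notin Dg]).
  by move=> /exists_inP [x Hx Hn]; exists x.
move=> /exists_inPn Hall; exfalso.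
have sub : (GS B <= GS A)%MS.
  apply/row_subP => i; rewrite rowK.
  have xB := enum_valP i; set x := enum_val i in xB *.
  case xA: (x \in A); first exact: rv_sub.
  have xBA : x \in B :\: A by rewrite inE xA.
  have /inDg [c [[s Hs cs] Hsum]] := negbNE (Hall x xBA).
  rewrite big_setU1 ?xA //= in Hsum.
  have cx : c x != 0.
    apply/negP => /eqP cx0; move: HA => /negP; apply; apply/inDg.
    exists c; split; last by move: Hsum; rewrite cx0 scale0r add0r.
    exists s => //; move: Hs; rewrite in_setU1; case/orP => // /eqP sx.
    by move: cs; rewrite sx cx0 eqxx.
  have E : c x *: rv x = - \sum_(s in A) c s *: rv s.
    apply/eqP; rewrite -addr_eq0; apply/eqP.
    have E0 : (c x *: col x g + \sum_(s in A) c s *: col s g)^T = 0.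
      by rewrite Hsum trmx0.
    by rewrite tr_add tr_sum in E0.
  rewrite -(scalerK cx (rv x)) E; apply: scalemx_sub.
  rewrite -scaleN1r; apply: scalemx_sub; apply: summx_sub => s' Hs'.
  by apply: scalemx_sub; exact: rv_sub.
move: HB; rewrite inE negbK /row_free => /eqP rB.
have := mxrankS sub; rewrite rB => /leq_trans /(_ (rank_leq_row _)).
by rewrite leqNgt ltAB.
Qed.

End Lin.

Lemma det_dep n d (h : config n d) (S : {set 'I_d}) (B : 'M[CC]_(n, #|S|)) :
  lin_dep h S -> \det (GS h S *m B) = 0.
Proof.
move=> /lin_dep1 [u u0 Hu]; apply/eqP/det0P; exists u => //.
by rewrite mulmxA Hu mul0mx.
Qed.

Definition GSX n d (S : {set 'I_d}) : 'M[{mpoly CC[n * d]}]_(#|S|, n) :=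
  \matrix_(i, j) 'X_(mxvec_index j (enum_val i)).
Arguments GSX : clear implicits.

Definition Pdet n d (S : {set 'I_d}) (B : 'M[CC]_(n, #|S|)) : {mpoly CC[n * d]} :=
  \det (GSX n d S *m map_mx (fun c => c%:MP) B).

Lemma peval_Pdet n d (S : {set 'I_d}) (B : 'M[CC]_(n, #|S|)) (h : config n d) :
  peval (@Pdet n d S B) h = \det (GS h S *m B).
Proof.
rewrite /peval /Pdet -det_map_mx map_mxM; congr (\det (_ *m _)).
  apply/matrixP => i j; rewrite !mxE.
  exact: (etrans (mevalXU _ _) (mxvecE h j (enum_val i))).
by apply/matrixP => i j; rewrite !mxE; exact: mevalC.
Qed.

Lemma var_circ n d (M : {set {set 'I_d}}) (g : config n d) :
  matroid_variety M g -> circuit_variety M g.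
Proof.
move=> Hg S HS; apply/lin_dep2; apply/negP => /row_freeP [B HB].
have := Hg (@Pdet n d S B); rewrite peval_Pdet HB det1 => H.
have : (1 : CC) = 0.
  apply: H => h Hh; rewrite peval_Pdet; apply: det_dep; exact/Hh.
by move/eqP; rewrite oner_eq0.
Qed.

From Stdlib Require Import Classical.

Lemma min_exists d (M D : {set {set 'I_d}}) (k : nat) : forall N : {set {set 'I_d}},
  (#|N| <= k)%N -> is_matroid N -> M \proper N -> N \subset D ->
  exists N0, in_min M N0 /\ N0 \subset D.
Proof.
elim: k => [|k IH] N HN HmN MN ND.
  by move: MN => /proper_card; rewrite leqNgt; move: HN; rewrite leqn0 => /eqP ->.
case: (classic (exists N', [/\ is_matroid N', dep_lt M N' & dep_lt N' N])).
  move=> [N' [HN' MN' N'N]]; apply: (IH N') => //.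
    by move: N'N => /proper_card Hc; rewrite -ltnS; exact: leq_trans Hc HN.
  by apply: subset_trans ND; exact: proper_sub.
by move=> Hno; exists N.
Qed.

Theorem mainTheorem1 (n d : nat) (M : {set {set 'I_d}}) :
  is_matroid M -> mrank M = n ->
  forall g : config n d,
    circuit_variety M g <->
    (matroid_variety M g \/
     exists N : {set {set 'I_d}}, in_min M N /\ circuit_variety N g).
Proof.
move=> HM _ g; split; last first.
  case; first exact: var_circ.
  move=> [N [[_ MN _] HN]] S HS; apply: HN; exact: (subsetP (proper_sub MN)).
move=> Hc.
have MD : M \subset Dg g by apply/subsetP => S HS; apply/inDg; exact: Hc.
case: (eqVneq M (Dg g)) => [EM | NE].
  left => p Hp; apply: Hp => S; rewrite EM; split => HS; [exact/(inDg g) | exact/(inDg g)].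
right.
have MP : M \proper Dg g by rewrite properEneq NE.
have [N0 [HN0 N0D]] := min_exists (leqnn _) (Dg_matroid g) MP (subxx _).
exists N0; split => // S HS; apply/inDg; exact: (subsetP N0D).
Qed.
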